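(* Let $M=p_1^{n_1}\cdots p_K^{n_K}$ with distinct primes and $n_\nu\in\mathbb{N}$, let $A\oplus B=\mathbb{Z}_M$, and fix $i$. Suppose $0\in B$ and that the tiling has $A$-uniform $(B,A)$ splitting parity in the $p_i$ direction, i.e. every fiber $a*F_i$ with $a\in A$ splits with parity $(B,A)$. Then $\Phi_{p_i^{n_i}}(X)\mid A(X)$.
   Context: $A\oplus B=\mathbb{Z}_M$ means every element of $\mathbb{Z}_M$ is uniquely $a+b$ with $a\in A$, $b\in B$. $A(X)=\sum_{a\in A}X^a$ with $A$ viewed in $\{0,\dots,M-1\}$; $\Phi_s$ is the $s$-th cyclotomic polynomial. $F_i=\{0,M/p_i,\dots,(p_i-1)M/p_i\}$, $x*F_i=\{x+f:f\in F_i\}$. For $Z\subset\mathbb{Z}_M$, $\Sigma_A(Z)=\{a\in A: a+b\in Z\text{ for some }b\in B\}$, $\Sigma_B(Z)=\{b\in B: a+b\in Z\text{ for some }a\in A\}$. A fiber $Z=x*F_i$ splits with parity $(B,A)$ if $p_i^{n_i}\mid b-b'$ for all $b,b'\in\Sigma_B(Z)$ and, for all distinct $a,a'\in\Sigma_A(Z)$, $p_i^{n_i-1}\mid a-a'$ but $p_i^{n_i}\nmid a-a'$. *)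

(* Defs.v *)
From mathcomp Require Import all_boot all_order all_algebra all_field.
Set Implicit Arguments. Unset Strict Implicit. Unset Printing Implicit Defensive.
Import GRing.Theory.

(* Z_M is modelled by 'I_M (residues 0..M-1) with addition mod M. *)

Definition tiling (M : nat) (A B : {set 'I_M}) : Prop :=
  forall x : 'I_M, exists! ab : 'I_M * 'I_M,
    [/\ ab.1 \in A, ab.2 \in B & (ab.1 + ab.2) %% M = x].

Definition fiber (M p : nat) (x : 'I_M) : {set 'I_M} :=
  [set y : 'I_M | [exists k : 'I_p, val y == (x + k * (M %/ p)) %% M]].

Definition SigmaA (M : nat) (A B Z : {set 'I_M}) : {set 'I_M} :=
  [set a in A | [exists b in B, exists z in Z, val z == (a + b) %% M]].
Definition SigmaB (M : nat) (A B Z : {set 'I_M}) : {set 'I_M} :=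
  [set b in B | [exists a in A, exists z in Z, val z == (a + b) %% M]].

(* Z splits with parity (B,A) in the p direction, n = exponent of p in M.
   Since p^n | M, divisibility of a difference in Z_M by p^k (k <= n) is
   congruence of representatives mod p^k. *)
Definition splits_BA (M p n : nat) (A B Z : {set 'I_M}) : Prop :=
  (forall b b', b \in SigmaB A B Z -> b' \in SigmaB A B Z ->
     val b = val b' %[mod p ^ n]) /\
  (forall a a', a \in SigmaA A B Z -> a' \in SigmaA A B Z -> a != a' ->
     val a = val a' %[mod p ^ n.-1] /\ val a <> val a' %[mod p ^ n]).

Definition maskpoly (M : nat) (A : {set 'I_M}) : {poly int} :=
  \sum_(a in A) 'X^(val a).

(* Main.v *)
Require Import Defs.
From mathcomp Require Import all_boot all_order all_algebra all_field.
From mathcomp Require Import ring.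
Set Implicit Arguments. Unset Strict Implicit. Unset Printing Implicit Defensive.
Import GRing.Theory.
Local Open Scope ring_scope.

Lemma Xcong (N u v : nat) : (u = v %[mod N])%N ->
  ('X^N - 1 : {poly int}) %| 'X^u - 'X^v.
Proof.
wlog le_vu: u v / (v <= u)%N.
  move=> IH huv; case: (leqP v u) => h; first exact: IH.
  rewrite -dvdpNr opprB; apply: IH; [exact: ltnW | by []].
move=> huv; have : (N %| u - v)%N by rewrite -eqn_mod_dvd // huv.
case/dvdnP=> t ht.
have -> : u = (v + t * N)%N by rewrite -ht subnKC.
have -> : 'X^(v + t * N) - 'X^v = 'X^v * ('X^(t * N) - 1) :> {poly int}
  by rewrite exprD mulrBr mulr1.
rewrite (mulnC t N) exprM (subrX1 (GRing.exp 'X N) t).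
by apply: dvdp_mull; apply: dvdp_mulr; exact: dvdpp.
Qed.

Lemma Xiter (D P : {poly int}) (t j : nat) : D %| 'X^t * P - P ->
  D %| 'X^(j * t) * P - P.
Proof.
move=> h; elim: j => [|j IH]; first by rewrite mul0n expr0 mul1r subrr dvdp0.
have -> : 'X^(j.+1 * t) * P - P = 'X^t * ('X^(j * t) * P - P) + ('X^t * P - P).
  rewrite mulSn exprD; ring.
by apply: dvdp_add => //; apply: dvdp_mull.
Qed.

Lemma XN_fact (p q : nat) :
  ('X^(q * p) - 1 : {poly int}) = ('X^q - 1) * \sum_(j < p) 'X^(j * q).
Proof.
rewrite exprM (subrX1 (GRing.exp 'X q) p); congr (_ * _); apply: eq_bigr => j _.
by rewrite -exprM mulnC.
Qed.

Lemma Phi_pp (p n : nat) : prime p -> (0 < n)%N ->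
  'Phi_(p ^ n) = \sum_(j < p) 'X^(j * p ^ n.-1).
Proof.
move=> pr_p n_gt0; set q := (p ^ n.-1)%N.
have NqP : (p ^ n = q * p)%N by rewrite /q -expnSr prednK.
have p_gt0 := prime_gt0 pr_p.
have q_gt0 : (0 < q)%N by rewrite expn_gt0 p_gt0.
have N_gt0 : (0 < p ^ n)%N by rewrite expn_gt0 p_gt0.
have hperm : perm_eq (divisors (p ^ n)%N) ((p ^ n)%N :: divisors q).
  apply: uniq_perm; first exact: divisors_uniq.
    rewrite /= divisors_uniq andbT -dvdn_divisors //.
    apply/negP => /(dvdn_leq q_gt0); rewrite NqP -{2}(muln1 q) leq_pmul2l //.
    by rewrite leqNgt prime_gt1.
  move=> d; rewrite in_cons -!dvdn_divisors //.
  apply/idP/idP.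
    case/(dvdn_pfactor _ _ pr_p) => k; rewrite leq_eqVlt => /orP[/eqP -> ->|].
      by rewrite eqxx.
    move=> lt_kn ->; apply/orP; right; rewrite /q dvdn_exp2l //.
    by rewrite -ltnS prednK.
  case/orP => [/eqP -> //|]; move/dvdn_trans; apply.
  by rewrite NqP dvdn_mulr.
have h1 := prod_Cyclotomic N_gt0.
rewrite (perm_big _ hperm) big_cons /= prod_Cyclotomic // NqP XN_fact in h1.
apply: (@mulIf _ ('X^q - 1)).
  by apply: monic_neq0; rewrite -[1]polyC1 monicXnsubC.
by rewrite NqP h1 mulrC.
Qed.

Local Close Scope ring_scope.
Theorem corollary4p9 (M p : nat) (A B : {set 'I_M}) :
  prime p -> p %| M ->
  tiling A B ->
  (exists2 b0 : 'I_M, b0 \in B & val b0 = 0) ->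
  (forall a, a \in A -> splits_BA p (logn p M) A B (fiber p a)) ->
  ('Phi_(p ^ logn p M) %| maskpoly A)%R.
Proof.
move=> pr_p pM til [b0 b0B b00] hsplit.
have M_gt0 : (0 < M)%N := leq_ltn_trans (leq0n _) (ltn_ord b0).
have p_gt0 := prime_gt0 pr_p.
have [r cop_pr defM] := pfactor_coprime pr_p M_gt0.
set n := logn p M in defM hsplit *.
have n_gt0 : (0 < n)%N by rewrite logn_gt0 mem_primes pr_p M_gt0 pM.
set q := (p ^ n.-1)%N.
set N := (p ^ n)%N.
have NqP : N = (q * p)%N by rewrite /N /q -expnSr prednK.
set s := (M %/ p)%N.
have defs : s = (r * q)%N by rewrite /s defM -/N NqP mulnA mulnK.
have NM : (N %| M)%N by rewrite defM dvdn_mull.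
pose P (x : 'I_M) (ab : 'I_M * 'I_M) :=
  [&& ab.1 \in A, ab.2 \in B & (ab.1 + ab.2) %% M == x].
have decP x : {ab | P x ab}.
  case: (pickP (P x)) => [ab h|h]; first by exists ab.
  exfalso; have [ab [[h1 h2 h3] _]] := til x.
  by move: (h ab); rewrite /P h1 h2 h3 eqxx.
have uniqP x ab ab' : P x ab -> P x ab' -> ab = ab'.
  move=> /and3P[h1 h2 /eqP h3] /and3P[h1' h2' /eqP h3'].
  have [c [_ hc]] := til x.
  by rewrite -(hc ab) ?(hc ab'); split.
pose xs (a : 'I_M) : 'I_M := Ordinal (ltn_pmod (a + s) M_gt0).
pose phi a := (sval (decP (xs a))).1.
pose beta a := (sval (decP (xs a))).2.
have Pphi a : P (xs a) (phi a, beta a).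
  by rewrite /phi /beta; case: (decP (xs a)) => [[x y]].
have phiA a : phi a \in A by case/and3P: (Pphi a).
have phiE a : ((phi a + beta a) %% M = (a + s) %% M)%N.
  by case/and3P: (Pphi a) => _ _ /eqP.
have p_gt1 := prime_gt1 pr_p.
have betaN a : a \in A -> (N %| beta a)%N.
  move=> aA; have [hB _] := hsplit a aA.
  have := hB (beta a) b0.
  rewrite !inE b0B /= b00 mod0n.
  case/and3P: (Pphi a) => _ -> /eqP h3 /=.
  move=> H; apply/eqP; apply: H.
    apply/existsP; exists (phi a); rewrite phiA /=; apply/existsP; exists (xs a).
    rewrite inE; apply/andP; split; last by rewrite h3.
    by apply/existsP; exists (Ordinal p_gt1); rewrite /= mul1n.
  apply/existsP; exists a; rewrite aA /=; apply/existsP; exists a.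
  rewrite inE addn0 modn_small // eqxx andbT.
  by apply/existsP; exists (Ordinal p_gt0); rewrite /= mul0n addn0 modn_small.
have phiN a : a \in A -> (phi a = a + s %[mod N])%N.
  move=> aA.
  have : ((phi a + beta a) %% N = (a + s) %% N)%N.
    by rewrite -(modn_dvdm _ NM) phiE (modn_dvdm _ NM).
  by rewrite -modnDmr (eqP (betaN a aA) : beta a %% N = 0)%N addn0.
have phi_inj : {in A &, injective phi}.
  move=> a1 a2 a1A a2A e.
  pose x : 'I_M := Ordinal (ltn_pmod (a1 + beta a2) M_gt0).
  have hb1 : beta a1 \in B by case/and3P: (Pphi a1).
  have hb2 : beta a2 \in B by case/and3P: (Pphi a2).
  have h1 : P x (a1, beta a2) by rewrite /P /= a1A hb2 eqxx.
  have k1 : (a2 + beta a1 + s = phi a2 + beta a2 + beta a1 %[mod M])%N.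
    by rewrite addnAC -modnDml -phiE modnDml.
  have k2 : (a1 + beta a2 + s = phi a1 + beta a1 + beta a2 %[mod M])%N.
    by rewrite addnAC -modnDml -phiE modnDml.
  have h2 : P x (a2, beta a1).
    rewrite /P /= a2A hb1 /= -(eqn_modDr s); apply/eqP.
    by rewrite k1 k2 e addnAC.
  by case: (uniqP x _ _ h1 h2).
have imA : phi @: A = A.
  apply/eqP; rewrite eqEcard card_in_imset // leqnn andbT.
  by apply/subsetP=> y /imsetP[a aA ->]; exact: phiA.
have hsum : maskpoly A = (\sum_(a in A) 'X^(phi a))%R.
  by rewrite /maskpoly -{1}imA big_imset.
have h1 : ('X^N - 1 %| 'X^s * maskpoly A - maskpoly A)%R.
  rewrite {2}hsum /maskpoly GRing.mulr_sumr -GRing.sumrB.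
  apply: (big_ind (fun x => 'X^N - 1 %| x)%R).
  - exact: dvdp0.
  - by move=> x y; apply: dvdp_add.
  move=> a aA; rewrite -GRing.exprD; apply: Xcong.
  by rewrite addnC (phiN a aA).
have r_gt0 : 0 < r by move: (M_gt0); rewrite {1}defM muln_gt0 => /andP[].
have [km kn hk _] := egcdnP p r_gt0.
rewrite gcdnC (eqP cop_pr) in hk.
have hks : (km * s = q %[mod N])%N.
  have -> : (km * s = kn * N + q)%N.
    by rewrite defs mulnA hk mulnDl mul1n NqP -mulnA (mulnC p q).
  by rewrite modnMDl.
have h2 := Xiter km h1.
have h4 j : ('X^N - 1 %| 'X^(j * q) * maskpoly A - maskpoly A)%R.
  have -> : ('X^(j * q) * maskpoly A - maskpoly A =
     ('X^(j * q) - 'X^(j * (km * s))) * maskpoly A +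
     ('X^(j * (km * s)) * maskpoly A - maskpoly A))%R.
    by rewrite GRing.mulrBl GRing.addrA GRing.subrK.
  apply: dvdp_add (Xiter j h2); apply: dvdp_mulr; apply: Xcong.
  by symmetry; rewrite -modnMmr hks modnMmr.
have h5 : ('X^N - 1 %| \sum_(j < p) ('X^(j * q) * maskpoly A - maskpoly A))%R.
  apply: (big_ind (fun x => 'X^N - 1 %| x)%R).
  - exact: dvdp0.
  - by move=> x y; apply: dvdp_add.
  by move=> j _; exact: h4.
rewrite GRing.sumrB -GRing.mulr_suml GRing.sumr_const card_ord in h5.
rewrite (Phi_pp pr_p n_gt0) -/q.
have hQ : (\sum_(j < p) 'X^(j * q) %| ('X^N - 1 : {poly int}))%R.
  by rewrite NqP XN_fact; apply: dvdp_mull; exact: dvdpp.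
have h6 := dvdp_trans hQ h5.
have h7 : (\sum_(j < p) 'X^(j * q) %| (\sum_(j < p) 'X^(j * q)) * maskpoly A)%R.
  by apply: dvdp_mulr; exact: dvdpp.
have h8 : (\sum_(j < p) 'X^(j * q) %| maskpoly A *+ p)%R.
  have -> : (maskpoly A *+ p = (\sum_(j < p) 'X^(j * q)) * maskpoly A -
       ((\sum_(j < p) 'X^(j * q)) * maskpoly A - maskpoly A *+ p))%R.
    by rewrite GRing.opprB GRing.addrC GRing.subrK.
  by apply: dvdp_add h7 _; rewrite dvdpNr.
by move: h8; rewrite -GRing.scaler_nat dvdpZr // Num.Theory.pnatr_eq0 -lt0n.
Qed.
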